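(* Fix $R\in\mathbb P_d$ and set $\operatorname{b}_R(P,Q):=\sqrt{\operatorname{B}_R(P,Q)}$ for $P,Q\in\mathbb P_d$. Then for all $P,Q,S\in\mathbb P_d$: (1) $\operatorname{b}_R(P,Q)=\operatorname{b}_R(Q,P)$; (2) $\operatorname{B}_R(P,Q)\ge 0$, so $\operatorname{b}_R(P,Q)\ge0$ is well-defined, and $\operatorname{b}_R(P,Q)=0$ if and only if $P=Q$; (3) $\operatorname{b}_R(P,Q)\le \operatorname{b}_R(P,S)+\operatorname{b}_R(S,Q)$.
   Context: $\mathbb P_d$ is the set of $d\times d$ complex positive definite matrices. The generalized fidelity is $\operatorname{F}_R(P,Q):=\operatorname{Tr}\big[\sqrt{R^{1/2}PR^{1/2}}\,R^{-1}\sqrt{R^{1/2}QR^{1/2}}\big]$ and the squared generalized Bures distance is $\operatorname{B}_R(P,Q):=\operatorname{Tr}[P+Q]-2\,\mathrm{Re}\,\operatorname{F}_R(P,Q)$. *)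

(* Defs.v *)
From HB Require Import structures.
From mathcomp Require Import all_boot all_order all_algebra.
From mathcomp Require Import reals complex.
From Stdlib Require Import ClassicalEpsilon.
Set Implicit Arguments. Unset Strict Implicit. Unset Printing Implicit Defensive.
Import Order.TTheory GRing.Theory Num.Theory.
Local Open Scope ring_scope.

Section Defs.
Variable C : numClosedFieldType.
Variable d : nat.

Definition adjmx (m n : nat) (A : 'M[C]_(m, n)) : 'M[C]_(n, m) :=
  (map_mx Num.conj A)^T.

Definition hermitian (A : 'M[C]_d) : Prop := adjmx A = A.

Definition psdmx (A : 'M[C]_d) : Prop :=
  hermitian A /\ forall x : 'cV[C]_d, 0 <= (adjmx x *m A *m x) 0 0.

Definition posdefmx (A : 'M[C]_d) : Prop :=
  hermitian A /\ forall x : 'cV[C]_d, x != 0 -> 0 < (adjmx x *m A *m x) 0 0.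

(* principal square root: the (unique) PSD matrix S with S S = A
   (for A PSD); an arbitrary value otherwise. *)
Definition sqrtmx (A : 'M[C]_d) : 'M[C]_d :=
  epsilon (inhabits 0) (fun S : 'M[C]_d => psdmx S /\ S *m S = A).

Definition fidR (R P Q : 'M[C]_d) : C :=
  \tr (sqrtmx (sqrtmx R *m P *m sqrtmx R) *m invmx R
        *m sqrtmx (sqrtmx R *m Q *m sqrtmx R)).

Definition buresR (R P Q : 'M[C]_d) : C :=
  \tr (P + Q) - 2%:R * 'Re (fidR R P Q).

Definition bR (R P Q : 'M[C]_d) : C := sqrtC (buresR R P Q).

End Defs.

(* Main.v *)
Require Import Defs.
From HB Require Import structures.
From mathcomp Require Import all_boot all_order all_algebra.
From mathcomp Require Import reals complex.
From mathcomp Require Import sesquilinear spectral.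
From Stdlib Require Import ClassicalEpsilon.
Import Order.TTheory GRing.Theory Num.Theory.
Set Implicit Arguments. Unset Strict Implicit. Unset Printing Implicit Defensive.
Local Open Scope ring_scope.

Section Aux.
Variable C : numClosedFieldType.

Lemma adjE m n (A : 'M[C]_(m, n)) : adjmx A = (A ^t* )%sesqui.
Proof. by rewrite /adjmx map_trmx. Qed.

Lemma adjmxK m n (A : 'M[C]_(m, n)) : adjmx (adjmx A) = A.
Proof. by rewrite !adjE trmxCK. Qed.

Lemma adjmxM m n p (A : 'M[C]_(m, n)) (B : 'M[C]_(n, p)) :
  adjmx (A *m B) = adjmx B *m adjmx A.
Proof. by rewrite /adjmx map_mxM trmx_mul. Qed.

Lemma adjmxD m n (A B : 'M[C]_(m, n)) : adjmx (A + B) = adjmx A + adjmx B.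
Proof. by apply/matrixP=> i j; rewrite !mxE rmorphD. Qed.

Lemma adjmxN m n (A : 'M[C]_(m, n)) : adjmx (- A) = - adjmx A.
Proof. by apply/matrixP=> i j; rewrite !mxE rmorphN. Qed.

Lemma adjmxB m n (A B : 'M[C]_(m, n)) : adjmx (A - B) = adjmx A - adjmx B.
Proof. by rewrite adjmxD adjmxN. Qed.

Lemma adjmx_inv n (A : 'M[C]_n) : adjmx (invmx A) = invmx (adjmx A).
Proof. by rewrite /adjmx map_invmx trmx_inv. Qed.

Lemma adjmx_delta n (i : 'I_n) :
  adjmx (delta_mx i 0 : 'cV[C]_n) = delta_mx 0 i.
Proof.
apply/matrixP=> a b; rewrite !mxE.
by case: (_ == _); case: (_ == _); rewrite /= ?conjC1 ?conjC0.
Qed.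

Lemma unitary_tV n (U : 'M[C]_n) : U \is unitarymx ->
  (U ^t* )%sesqui *m U = 1%:M.
Proof.
by move=> uU; rewrite -invmx_unitary // mulVmx // unitarymx_unit.
Qed.

Lemma psd_sqrt n (A : 'M[C]_n) : psdmx A -> exists S, psdmx S /\ S *m S = A.
Proof.
move=> [hA pA].
have nA : A \is normalmx by apply/normalmxP; rewrite -adjE hA.
set U := spectralmx A; set D := spectral_diag A.
have uU : U \is unitarymx := spectral_unitarymx A.
have eA : A = (U ^t* )%sesqui *m diag_mx D *m U.
  by rewrite -invmx_unitary //; exact/orthomx_spectralP.
have UUt : U *m (U ^t* )%sesqui = 1%:M := unitarymxP uU.
have UtU := unitary_tV uU.
have D0 : forall i, 0 <= D 0 i.
  move=> i; have := pA ((U ^t* )%sesqui *m delta_mx i 0).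
  rewrite adjmxM adjmx_delta adjE trmxCK eA !mulmxA.
  rewrite -(mulmxA _ U) UUt mulmx1 -(mulmxA _ U) UUt mulmx1.
  rewrite -rowE -colE !mxE eqxx mulr1n; done.
pose s := \row_j sqrtC (D 0 j).
have s0 : forall j, 0 <= s 0 j by move=> j; rewrite mxE sqrtC_ge0.
exists ((U ^t* )%sesqui *m diag_mx s *m U); split; last first.
  rewrite !mulmxA -(mulmxA _ U) UUt mulmx1 -(mulmxA (U ^t* )%sesqui) mulmx_diag.
  rewrite eA; congr (_ *m diag_mx _ *m _); apply/rowP=> j.
  by rewrite !mxE -expr2 sqrtCK.
split.
  rewrite /Defs.hermitian !adjmxM mulmxA.
  have -> : adjmx (diag_mx s) = diag_mx s.
    apply/matrixP=> i j; rewrite !mxE.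
    have [->|ne] := eqVneq i j; last by rewrite !mulr0n conjC0.
    by rewrite !mulr1n geC0_conj // sqrtC_ge0.
  by rewrite !adjE trmxCK.
move=> x; set y := U *m x.
have -> : adjmx x *m ((U ^t* )%sesqui *m diag_mx s *m U) *m x
          = adjmx y *m diag_mx s *m y.
  by rewrite /y adjmxM !adjE -!mulmxA.
rewrite mul_mx_diag !mxE; apply: sumr_ge0 => i _; rewrite !mxE.
rewrite mulrAC mulr_ge0 // ?sqrtC_ge0 ?D0 // mulrC.
exact: mul_conjC_ge0.
Qed.


Lemma sqrtmx_spec n (A : 'M[C]_n) : psdmx A ->
  psdmx (sqrtmx A) /\ sqrtmx A *m sqrtmx A = A.
Proof.
move=> pA; rewrite /sqrtmx.
exact: (epsilon_spec (inhabits 0) (fun S : 'M[C]_n => psdmx S /\ S *m S = A) (psd_sqrt pA)).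
Qed.

Lemma pd_psd n (A : 'M[C]_n) : posdefmx A -> psdmx A.
Proof.
move=> [hA pA]; split=> // x; have [->|x0] := eqVneq x 0.
  by rewrite mulmx0 mxE.
by apply/ltW/pA.
Qed.

Lemma pd_unit n (A : 'M[C]_n) : posdefmx A -> A \in unitmx.
Proof.
move=> [hA pA]; rewrite unitmxE unitfE; apply/negP => /det0P [v v0 vA].
have x0 : adjmx v != 0.
  apply: contra v0 => /eqP e; apply/eqP.
  by rewrite -[v]adjmxK e; apply/matrixP=> i j; rewrite !mxE conjC0.
have := pA _ x0; rewrite adjmxK vA mul0mx mxE ltxx //.
Qed.

Lemma psd_conj n (T M : 'M[C]_n) : Defs.hermitian T -> psdmx M ->
  psdmx (T *m M *m T).
Proof.
move=> hT [hM pM]; split.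
  by rewrite /Defs.hermitian !adjmxM hT hM mulmxA.
move=> x; have := pM (T *m x); rewrite adjmxM hT !mulmxA //.
Qed.

Lemma dotmx_mxvec m n (X Z : 'M[C]_(m, n)) :
  dotmx (mxvec X) (mxvec Z) = \tr (adjmx Z *m X).
Proof.
rewrite dotmxE mxE.
rewrite (reindex (fun p : 'I_m * 'I_n => mxvec_index p.1 p.2)); last first.
  have [g h1 h2] := curry_mxvec_bij m n.
  exists g => [[i j] _|k _]; [exact: (h1 (i, j) isT) | have := h2 k isT; case: (g k) => i j //].
rewrite /mxtrace; under [RHS]eq_bigr do rewrite mxE.
rewrite [RHS]exchange_big pair_big /=.
apply: eq_bigr => -[i j] _ /=.
by rewrite mxvecE /adjmx !mxE mxvecE mulrC.
Qed.

Lemma dot_triangle m (a b : 'rV[C]_m) :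
  sqrtC (dotmx (a + b) (a + b)) <=
  sqrtC (dotmx a a) + sqrtC (dotmx b b).
Proof.
set sa := sqrtC (dotmx a a); set sb := sqrtC (dotmx b b).
have sa0 : 0 <= sa by exact: sqrt_dnorm_ge0.
have sb0 : 0 <= sb by exact: sqrt_dnorm_ge0.
rewrite -(sqrCK (addr_ge0 sa0 sb0)) ler_sqrtC ?nnegrE ?dnorm_ge0 ?exprn_ge0 ?addr_ge0 //.
rewrite dnormD sqrrD /sa /sb !sqrtCK [X in _ <= X]addrAC lerD2l.
set d := dotmx a b.
have -> : d + d^* = 2%:R * 'Re d by rewrite ReE mulrC divfK // pnatr_eq0.
rewrite -[X in _ <= X]mulr_natl ler_wpM2l ?ler0n //.
apply: le_trans (real_ler_norm (Creal_Re d)) _.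
apply: le_trans (leif_normC_Re_Creal d) _.
exact: (CauchySchwarz_sqrt (@dotmx C m) a b).
Qed.


Section Main.
Variables (n : nat) (R : 'M[C]_n).
Hypothesis pR : posdefmx R.

Let T := sqrtmx R.
Let sT : psdmx T /\ T *m T = R := sqrtmx_spec (pd_psd pR).
Let hT : Defs.hermitian T := sT.1.1.
Let eTR : T *m T = R := sT.2.
Let uR : R \in unitmx := pd_unit pR.
Let uT : T \in unitmx.
Proof. by have := uR; rewrite -eTR unitmx_mul => /andP[]. Qed.

Let iR : invmx R = invmx T *m invmx T.
Proof.
have e1 : invmx T *m invmx T *m R = 1%:M.
  by rewrite -eTR mulmxA -(mulmxA (invmx T)) mulVmx // mulmx1 mulVmx.
by rewrite -[LHS]mul1mx -e1 -mulmxA mulmxV // mulmx1.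
Qed.

Definition Y (P : 'M[C]_n) := invmx T *m sqrtmx (T *m P *m T).

Lemma YY P : posdefmx P -> Y P *m adjmx (Y P) = P.
Proof.
move=> pP; have [[hs _] ss] := sqrtmx_spec (psd_conj hT (pd_psd pP)).
rewrite /Y adjmxM adjmx_inv hT hs mulmxA -(mulmxA (invmx T)) ss.
by rewrite !mulmxA mulVmx // mul1mx -mulmxA mulmxV // mulmx1.
Qed.

Lemma fidY P Q : posdefmx P -> posdefmx Q ->
  fidR R P Q = \tr (adjmx (Y P) *m Y Q).
Proof.
move=> pP pQ; have [[hs _] ss] := sqrtmx_spec (psd_conj hT (pd_psd pP)).
rewrite /fidR /Y -/T adjmxM adjmx_inv hT hs iR.
by rewrite !mulmxA.
Qed.

Lemma trY P : posdefmx P -> \tr P = dotmx (mxvec (Y P)) (mxvec (Y P)).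
Proof. by move=> pP; rewrite dotmx_mxvec mxtrace_mulC YY. Qed.

Lemma buresY P Q : posdefmx P -> posdefmx Q ->
  buresR R P Q = dotmx (mxvec (Y P) - mxvec (Y Q)) (mxvec (Y P) - mxvec (Y Q)).
Proof.
move=> pP pQ; rewrite /buresR mxtraceD (trY pP) (trY pQ) (fidY pP pQ) dnormB.
rewrite -dotmx_mxvec.
set d := dotmx (mxvec (Y P)) (mxvec (Y Q)).
have -> : dotmx (mxvec (Y Q)) (mxvec (Y P)) = d^*.
  by rewrite /d hermC /= expr0 mul1r.
by rewrite Re_conj ReE mulrC divfK // pnatr_eq0.
Qed.

Lemma main_gen : forall P Q S : 'M[C]_n,
    posdefmx P -> posdefmx Q -> posdefmx S ->
    [/\ bR R P Q = bR R Q P,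
        0 <= buresR R P Q /\ (bR R P Q = 0 <-> P = Q) &
        bR R P Q <= bR R P S + bR R S Q].
Proof.
move=> P Q S pP pQ pS; rewrite /bR !buresY //; split.
- by rewrite -opprB -scaleN1r dnormZ normrN1 expr1n mul1r.
- split; first exact: dnorm_ge0.
  split.
    move/eqP; rewrite sqrt_dnorm_eq0 subr_eq0 => /eqP e.
    by rewrite -(YY pP) -(YY pQ) (can_inj mxvecK e).
  by move=> ->; rewrite subrr; apply/eqP; rewrite sqrt_dnorm_eq0.
- have -> : mxvec (Y P) - mxvec (Y Q) =
            (mxvec (Y P) - mxvec (Y S)) + (mxvec (Y S) - mxvec (Y Q)).
    by rewrite addrA subrK.
  exact: dot_triangle.
Qed.

End Main.

End Aux.

Local Open Scope complex_scope.

Theorem mainTheorem3 (RR : realType) (d : nat) (R : 'M[RR[i]]_d) :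
  posdefmx R ->
  forall P Q S : 'M[RR[i]]_d,
    posdefmx P -> posdefmx Q -> posdefmx S ->
    [/\ bR R P Q = bR R Q P,
        0 <= buresR R P Q /\ (bR R P Q = 0 <-> P = Q) &
        bR R P Q <= bR R P S + bR R S Q].
Proof. by move=> pR; exact: main_gen. Qed.
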